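(* Consider one execution of the Modified NCB algorithm with inputs $k$ and $W$, where $\sqrt T\le W\le T$, and assume $968kS\le T$. Let $i^*$ be an arm with $\mu_{i^*}=\mu^*$. On the event $E$, at every round $t$ of Phase 2, $\overline{\mathrm{NCB}}_{i^*,t}\ge\mu^*$, where $\overline{\mathrm{NCB}}_{i^*,t}$ denotes the value of $\overline{\mathrm{NCB}}_{i^*}$ at round $t$.
   Context: Bandit setup: $k$ arms, arm $i$ a distribution on $[0,1]$ with mean $\mu_i$, $\mu^*:=\max_i\mu_i>0$. $\log$ is the natural logarithm; $c:=3$; $T$ is the overall horizon and $S:=\frac{c^2\log T}{\mu^*}$. Modified NCB algorithm (inputs $k$, window $W$): maintain counts $n_i$ and empirical means $\widehat\mu_i$ (both initially $0$), round index $t=1$. Phase 1: while $\max_i n_i\widehat\mu_i\le 420c^2\log W$ and $t\le W$, pull a uniformly random arm, update, increment $t$. Phase 2: while $t\le W$, pull an arm maximizing $\overline{\mathrm{NCB}}_i:=\widehat\mu_i+2c\sqrt{2\widehat\mu_i\log W/n_i}$ (ties arbitrary), update, increment $t$. Canonical model: a $k\times T$ table $(Y_{i,s})$ of independent entries with $Y_{i,s}$ distributed as arm $i$, the $s$-th pull of arm $i$ yielding $Y_{i,s}$; $\widehat\mu_{i,s}:=\frac1s\sum_{r=1}^sY_{i,r}$. The uniform choices in Phase 1 are $U_1,U_2,\dots$, independent uniform in $[k]$ (independent of the table). Events: $E_1$: for every integer $r$ with $128kS\le r\le T$ and every arm $i$, the number of $r'\le r$ with $U_{r'}=i$ is at least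 $\frac{r}{2k}$ and at most $\frac{3r}{2k}$. $E_2$: for every arm $i$ with $\mu_i>\frac{\mu^*}{64}$ and every integer $s$ with $64S\le s\le T$, $|\mu_i-\widehat\mu_{i,s}|\le c\sqrt{\frac{\mu_i\log T}{s}}$. $E_3$: for every arm $j$ with $\mu_j\le\frac{\mu^*}{64}$ and every integer $s$ with $64S\le s\le T$, $\widehat\mu_{j,s}<\frac{\mu^*}{32}$. $E:=E_1\cap E_2\cap E_3$. *)

(* Defs.v *)
From HB Require Import structures.
From mathcomp Require Import all_boot all_order all_algebra.
From mathcomp Require Import reals exp.
Set Implicit Arguments. Unset Strict Implicit. Unset Printing Implicit Defensive.
Import Order.TTheory GRing.Theory Num.Theory.
Local Open Scope ring_scope.

Section Bandit.
Variables (R : realType) (k : nat).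

Definition cst : R := 3.

(* mu^* = max_i mu_i  (means are nonnegative, so the seed 0 is harmless) *)
Definition mustar (mu : 'I_k -> R) : R := \big[Num.max/0]_(i < k) mu i.

Definition Sval (mu : 'I_k -> R) (T : nat) : R := cst ^+ 2 * ln (T%:R) / mustar mu.

(* canonical model: Y i s is the s-th pull (s >= 1) of arm i;
   empirical mean of the first s pulls (0 when s = 0, as in the algorithm) *)
Definition muhat (Y : 'I_k -> nat -> R) (i : 'I_k) (s : nat) : R :=
  (\sum_(1 <= r < s.+1) Y i r) / s%:R.

Definition ucount (U : nat -> 'I_k) (i : 'I_k) (r : nat) : nat :=
  \sum_(1 <= r' < r.+1) (U r' == i : nat).

Definition E1 (U : nat -> 'I_k) (mu : 'I_k -> R) (T : nat) : Prop :=
  forall (r : nat) (i : 'I_k), 128 * k%:R * Sval mu T <= r%:R -> (r <= T)%N ->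
    (r%:R / (2 * k%:R) : R) <= (ucount U i r)%:R /\
    ((ucount U i r)%:R : R) <= 3 * r%:R / (2 * k%:R).

Definition E2 (Y : 'I_k -> nat -> R) (mu : 'I_k -> R) (T : nat) : Prop :=
  forall (i : 'I_k) (s : nat), mustar mu / 64 < mu i ->
    64 * Sval mu T <= s%:R -> (s <= T)%N ->
    `|mu i - muhat Y i s| <= cst * Num.sqrt (mu i * ln (T%:R) / s%:R).

Definition E3 (Y : 'I_k -> nat -> R) (mu : 'I_k -> R) (T : nat) : Prop :=
  forall (j : 'I_k) (s : nat), mu j <= mustar mu / 64 ->
    64 * Sval mu T <= s%:R -> (s <= T)%N ->
    muhat Y j s < mustar mu / 32.

Definition eventE Y U mu T : Prop := E1 U mu T /\ E2 Y mu T /\ E3 Y mu T.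

(* An execution is described by the arm A t pulled at each round t >= 1.
   n_i at (the start of) round t = number of pulls of i in rounds 1..t-1. *)
Definition npulls (A : nat -> 'I_k) (i : 'I_k) (t : nat) : nat :=
  \sum_(1 <= s < t) (A s == i : nat).

Definition muhat_t Y A i t : R := muhat Y i (npulls A i t).

Definition phase1_cond Y A (W t : nat) : Prop :=
  forall i : 'I_k,
    (npulls A i t)%:R * muhat_t Y A i t <= 420 * cst ^+ 2 * ln (W%:R).

Definition in_phase1 Y A (W t : nat) : Prop :=
  [/\ (1 <= t)%N, (t <= W)%N & forall t', (1 <= t')%N -> (t' <= t)%N -> phase1_cond Y A W t'].

Definition in_phase2 Y A (W t : nat) : Prop :=
  [/\ (1 <= t)%N, (t <= W)%N &
      exists2 t', ((1 <= t') && (t' <= t))%N & ~ phase1_cond Y A W t'].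

Definition NCBbar Y A (W : nat) (i : 'I_k) (t : nat) : R :=
  muhat_t Y A i t +
  2 * cst * Num.sqrt (2 * muhat_t Y A i t * ln (W%:R) / (npulls A i t)%:R).

(* A is an execution of Modified NCB(k, W) on table Y with Phase-1 uniform
   choices U (U r is the r-th uniform choice, used at round r of Phase 1),
   ties in Phase 2 broken arbitrarily. *)
Definition ncb_run Y (U : nat -> 'I_k) (A : nat -> 'I_k) (W : nat) : Prop :=
  forall t : nat,
    (in_phase1 Y A W t -> A t = U t) /\
    (in_phase2 Y A W t -> forall j : 'I_k, NCBbar Y A W j t <= NCBbar Y A W (A t) t).

End Bandit.

(* Main.v *)
Require Import Defs.
From HB Require Import structures.
From mathcomp Require Import all_boot all_order all_algebra.
From mathcomp Require Import reals exp.
From mathcomp Require Import sequences.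
From mathcomp Require Import lra zify ring.
Import Order.TTheory GRing.Theory Num.Theory.
Local Open Scope ring_scope.

Section Helpers.
Set Implicit Arguments. Unset Strict Implicit.
Lemma mu_le_star (R : realType) (k : nat) (mu : 'I_k -> R) i : mu i <= mustar mu.
Proof.
rewrite /mustar; have: i \in index_enum 'I_k by rewrite mem_index_enum.
elim: (index_enum _) => [|j s IH] //=.
rewrite big_cons inE => /orP [/eqP ->|/IH h]; rewrite le_max ?lexx //.
by rewrite h orbT.
Qed.

Definition sY (R : realType) k (Y : 'I_k -> nat -> R) i n : R := \sum_(1 <= r < n.+1) Y i r.

Lemma muhat_sY (R : realType) k (Y : 'I_k -> nat -> R) i n :
  n%:R * muhat Y i n = sY Y i n.
Proof.
rewrite /muhat /sY; case: n => [|n]; first by rewrite big_geq // mul0r.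
by rewrite mulrC divfK // pnatr_eq0.
Qed.

Lemma sY_mono (R : realType) k (Y : 'I_k -> nat -> R) i m n :
  (forall s, 0 <= Y i s) -> (m <= n)%N -> sY Y i m <= sY Y i n.
Proof.
move=> Y0 mn; rewrite /sY [X in _ <= X](big_cat_nat _ (n:=m.+1)) //=.
by rewrite lerDl sumr_ge0.
Qed.

Lemma sY_le (R : realType) k (Y : 'I_k -> nat -> R) i n :
  (forall s, Y i s <= 1) -> sY Y i n <= n%:R.
Proof.
move=> Y1; rewrite /sY (le_trans (ler_sum _ (fun r _ => Y1 r))) //.
by rewrite sumr_const_nat subn1 /=.
Qed.

Lemma nat_sum_mono (f : nat -> nat) a m n : (m <= n)%N ->
  (\sum_(a <= r < m) f r <= \sum_(a <= r < n) f r)%N.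
Proof.
move=> mn; case: (leqP a m) => am; last by rewrite big_geq ?leq0n // ltnW.
by rewrite [X in (_ <= X)%N](big_cat_nat _ (n:=m)) //= leq_addr.
Qed.

Lemma nat_sum_le1 (f : nat -> nat) a n : (forall r, f r <= 1)%N ->
  (\sum_(a <= r < n) f r <= n - a)%N.
Proof.
move=> h; rewrite (@leq_trans (\sum_(a <= r < n) 1)) //; first by apply: leq_sum => r _; exact: h.
by rewrite sum_nat_const_nat muln1.
Qed.

Lemma ucount_mono k (U : nat -> 'I_k) i m n : (m <= n)%N -> (ucount U i m <= ucount U i n)%N.
Proof. by move=> mn; apply: nat_sum_mono. Qed.

Lemma ucount_le k (U : nat -> 'I_k) i r : (ucount U i r <= r)%N.
Proof. rewrite /ucount (leq_trans (nat_sum_le1 _ _ _)) ?subn1 // => r'; by case: eqP. Qed.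

Lemma npulls_mono k (A : nat -> 'I_k) i m n : (m <= n)%N -> (npulls A i m <= npulls A i n)%N.
Proof. by move=> mn; apply: nat_sum_mono. Qed.

Lemma npulls_le k (A : nat -> 'I_k) i t : (npulls A i t <= t.-1)%N.
Proof. rewrite /npulls (leq_trans (nat_sum_le1 _ _ _)) ?subn1 // => r'; by case: eqP. Qed.

End Helpers.

Theorem lemma9 (R : realType) (k : nat) (mu : 'I_k -> R)
  (Y : 'I_k -> nat -> R) (U : nat -> 'I_k) (A : nat -> 'I_k)
  (T W : nat) (istar : 'I_k) :
  (forall i, 0 <= mu i <= 1) ->
  (forall i s, 0 <= Y i s <= 1) ->
  0 < mustar mu ->
  Num.sqrt (T%:R : R) <= W%:R -> (W <= T)%N ->
  968 * k%:R * Sval mu T <= T%:R ->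
  mu istar = mustar mu ->
  ncb_run Y U A W ->
  eventE Y U mu T ->
  forall t : nat, in_phase2 Y A W t -> mustar mu <= NCBbar Y A W istar t.
Proof.
move=> hmu hY msp hsqW hWT h968 hstar hrun [E1 [E2 E3]] t [t1 tW [t' /andP[t'1 t't] nP]].
set ms := mustar mu in msp hstar E2 E3 *.
set L : R := ln T%:R.
set SS := Sval mu T in h968 E1 E2 E3.
have hS : SS * ms = 9 * L.
  rewrite /SS /Sval /cst -/L divfK ?gt_eqF // expr2; clear; lra.
have ms1 : ms <= 1 by rewrite -hstar; case/andP: (hmu istar).
have Y0 i s : 0 <= Y i s by case/andP: (hY i s).
have Y1 i s : Y i s <= 1 by case/andP: (hY i s).
have Lp : 0 < L.
  rewrite ltNge; apply/negP => hL.
  have := E2 istar 0%N; rewrite hstar /muhat big_geq // !mul0r invr0 !mulr0 sqrtr0 mulr0 subr0.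
  have S0 : SS <= 0.
    rewrite /SS /Sval /cst -/L pmulr_lle0 ?invr_gt0 // expr2; clear -hL; nra.
  move=> /(_ _ _ (leq0n _)); rewrite ger0_norm; last exact: ltW.
  rewrite -/ms -/SS => h; have := h ltac:(clear -msp; lra) ltac:(clear -S0; lra).
  clear -msp; lra.
have T2 : (2 <= T)%N.
  case: (leqP 2 T) => // hT; exfalso.
  have : L <= 0 by apply: ln_le0; rewrite (ler_nat R T 1); case: T hT {L Lp h968 hsqW hWT E1 E2 E3 hS SS}.
  clear -Lp; lra.
have Tr : 2 <= T%:R :> R by rewrite (ler_nat R 2 T).
have Tp : 0 < T%:R :> R by clear -Tr; lra.
have Lh : 1/2 <= L.
  have := expR_ge1Dx (- L); rewrite expRN /L lnK ?posrE // -/L => h.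
  have hx : T%:R^-1 * T%:R = 1 :> R by rewrite mulVf // gt_eqF.
  have : 0 < T%:R^-1 :> R by rewrite invr_gt0.
  clear -h hx Tr; nra.
have LW : L <= 2 * ln W%:R.
  have sqT := sqr_sqrtr (ltW Tp).
  have sq0 := sqrtr_ge0 (T%:R : R).
  have TW : T%:R <= W%:R ^+ 2 :> R.
    apply: (@le_trans _ _ (Num.sqrt (T%:R : R) ^+ 2)); first by rewrite sqT.
    rewrite !expr2; exact: ler_pM.
  have Wp : 0 < W%:R :> R.
    have := ler0n R W; move: TW; rewrite expr2; clear -Tr; nra.
  rewrite /L -(ler_ln (x := T%:R)) ?posrE ?exprn_gt0 // in TW.
  by rewrite lnXn // mulr2n -/L in TW; clear -TW; lra.
have lnW0 : 0 <= ln W%:R :> R by clear -LW Lp; lra.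
clear hsqW Tp.
pose pb t := [forall i, (npulls A i t)%:R * muhat_t Y A i t <= 420 * cst R ^+ 2 * ln (W%:R : R)].
have pbE t0 : phase1_cond Y A W t0 <-> pb t0.
  by split => [h|/forallP h]; [apply/forallP|].
have exP : exists n, (1 <= n)%N && ~~ pb n.
  by exists t'; rewrite t'1 /=; apply/negP => /pbE.
case: (ex_minnP exP) => t0 /andP[t01 nb] minP.
have t0t' : (t0 <= t')%N by apply: minP; rewrite t'1 /=; apply/negP => /pbE.
have t0t : (t0 <= t)%N by apply: leq_trans t't.
have AU r : (1 <= r)%N -> (r < t0)%N -> A r = U r.
  move=> r1 rt0; case: (hrun r) => h _; apply: h; split => //.
    by apply: leq_trans tW; apply: leq_trans t0t; apply: ltnW.
  move=> t'' h1 h2; apply/pbE; apply/negPn/negP => hn.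
  have := leq_trans (minP t'' (introT andP (conj h1 hn))) h2; by rewrite leqNgt rt0.
set r := t0.-1.
have nU i : npulls A i t0 = ucount U i r.
  rewrite /npulls /ucount /r prednK //; apply: eq_big_nat => s /andP[s1 st].
  by rewrite AU.
have k1 : (0 < k)%N := leq_ltn_trans (leq0n _) (ltn_ord istar).
have kr : 1 <= k%:R :> R by rewrite (ler_nat R 1 k).
have kp : 0 < k%:R :> R by clear -kr; lra.
have SSp : 0 < SS.
  have : 0 < SS * ms by rewrite hS; clear -Lp; lra.
  by rewrite pmulr_lgt0.
have kS0 : 0 <= k%:R * SS by apply: mulr_ge0; clear -kr SSp; lra.
have rT : (r <= T)%N.
  apply: leq_trans hWT; apply: leq_trans tW; apply: leq_trans t0t; exact: leq_pred.
have rS : 128 * k%:R * SS <= r%:R.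
  move/forallPn: nb => [i]; rewrite -ltNge => hi.
  rewrite /muhat_t muhat_sY nU /cst expr2 in hi.
  have hi2 : 1890 * L < sY Y i (ucount U i r) by clear -hi LW; lra.
  rewrite -mulrA -mulrA in h968 *.
  rewrite leNgt; apply/negP => hr.
  set x := 128 * (k%:R * SS) in hr.
  have x0 : 0 <= x by rewrite /x; clear -kS0; lra.
  set r0 := (Num.truncn x).+1.
  have hr0a : x < r0%:R := truncnS_gt x.
  have hr0b : r0%:R <= x + 1.
    have h := truncn_le x; rewrite x0 in h.
    by rewrite /r0 -natr1; clear -h; lra.
  have r0T : (r0 <= T)%N.
    rewrite -(ler_nat R); rewrite /x in hr0a hr0b; clear -hr0b h968 Tr kS0; lra.
  have rr0 : (r <= r0)%N by apply: ltnW; rewrite -(ltr_nat R); clear -hr hr0a; lra.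
  have [m1 m2] := E1 r0 i (ltac:(rewrite -mulrA; exact: ltW hr0a)) r0T.
  set m := ucount U i r0 in m1 m2.
  have kk : 0 < 2 * k%:R :> R by clear -kp; lra.
  rewrite ler_pdivrMr // in m1; rewrite ler_pdivlMr // in m2.
  have mS : 64 * SS <= m%:R.
    rewrite -(ler_pM2l kp); rewrite /x in hr0a; clear -hr0a m1; lra.
  have mS2 : m%:R <= 192 * SS + 3/2.
    have : k%:R * m%:R <= k%:R * (192 * SS + 3/2).
      rewrite /x in hr0b; clear -hr0b m2 kr; lra.
    by rewrite (ler_pM2l kp).
  have mT : (m <= T)%N := leq_trans (ucount_le _ _ _) r0T.
  have nm : (ucount U i r <= m)%N := ucount_mono _ _ rr0.
  have hsum : sY Y i (ucount U i r) <= m%:R * muhat Y i m.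
    by rewrite muhat_sY; apply: sY_mono.
  have mms : m%:R * ms <= 1728 * L + 3/2.
    have : m%:R * ms <= (192 * SS + 3/2) * ms by rewrite ler_pM2r.
    rewrite mulrDl -mulrA hS; clear -ms1 msp; lra.
  have m0 : 0 <= m%:R :> R := ler0n R m.
  case: (leP (mu i) (ms/64)) => hmi.
    have h3 := E3 i m hmi mS mT.
    have : m%:R * muhat Y i m <= m%:R * (ms / 32).
      by apply: ler_wpM2l => //; apply: ltW.
    clear -hi2 hsum mms Lh; lra.
  have := E2 i m hmi mS mT; rewrite -/L => h2.
  have mp : 0 < m%:R :> R by clear -mS SSp; lra.
  have mui : 0 <= mu i by case/andP: (hmu i).
  set q := Num.sqrt (mu i * L / m%:R) in h2.
  have q0 : 0 <= q := sqrtr_ge0 _.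
  have hq : q * q * m%:R = mu i * L.
    rewrite -expr2 /q sqr_sqrtr ?divfK ?gt_eqF //.
    by apply: divr_ge0; [apply: mulr_ge0; clear -mui Lp; lra | clear -mp; lra].
  move: h2; rewrite /cst ler_norml => /andP[h2a _].
  have hp : m%:R * muhat Y i m <= m%:R * mu i + 3 * (m%:R * q).
    have : muhat Y i m <= mu i + 3 * q by clear -h2a; lra.
    move/(ler_wpM2l m0); clear; lra.
  have ams : m%:R * mu i <= 1728 * L + 3/2.
    have : m%:R * mu i <= m%:R * ms by apply: ler_wpM2l => //; exact: mu_le_star.
    clear -mms; lra.
  have hp2 : (m%:R * q) * (m%:R * q) = (m%:R * mu i) * L.
    have -> : (m%:R * mu i) * L = m%:R * (q * q * m%:R) by rewrite hq mulrA.
    ring.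
  set p := m%:R * q in hp hp2.
  set a := m%:R * mu i in hp hp2 ams.
  have p0 : 0 <= p by apply: mulr_ge0.
  have hz : 0 < 3 * p - (162 * L - 3/2) by clear -hi2 hsum hp ams; lra.
  have hc : 0 < 3 * p + (162 * L - 3/2) by clear -p0 Lh; lra.
  have hzc := mulr_gt0 hz hc.
  have haL : a * L <= (1728 * L + 3/2) * L by apply: ler_wpM2r => //; clear -Lp; lra.
  have hLL : L * (1/2) <= L * L by apply: ler_wpM2l => //; clear -Lp; lra.
  clear -hzc hp2 haL hLL Lh; lra.
set n := npulls A istar t.
have nr : (ucount U istar r <= n)%N by rewrite -nU; exact: npulls_mono.
have [u1 _] := E1 r istar rS rT.
have kk : 0 < 2 * k%:R :> R by clear -kp; lra.
rewrite ler_pdivrMr // in u1.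
have nS : 64 * SS <= n%:R.
  have : (ucount U istar r)%:R <= n%:R :> R by rewrite ler_nat.
  move=> hn; rewrite -(ler_pM2l kp); clear -rS u1 hn kp; nra.
have nT : (n <= T)%N.
  apply: leq_trans (npulls_le _ _ _) _; apply: leq_trans hWT.
  apply: leq_trans tW; exact: leq_pred.
have hms : ms / 64 < mu istar by rewrite hstar; clear -msp; lra.
have := E2 istar n hms nS nT; rewrite hstar -/L /cst.
rewrite /NCBbar /muhat_t -/n /cst.
set h := muhat Y istar n.
have np : 0 < n%:R :> R by clear -nS SSp; lra.
set d := Num.sqrt (ms * L / n%:R).
have d0 : 0 <= d := sqrtr_ge0 _.
have hd : d * d * n%:R = ms * L.
  rewrite -expr2 /d sqr_sqrtr ?divfK ?gt_eqF //.
  by apply: divr_ge0; [apply: mulr_ge0; clear -msp Lp; lra | clear -np; lra].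
rewrite ler_norml => /andP[_ hh].
have dms : d * d * 576 <= ms * ms.
  have : 576 * L <= ms * n%:R.
    have : 64 * (SS * ms) <= n%:R * ms by rewrite mulrA ler_pM2r.
    by rewrite hS; clear; lra.
  move=> h5.
  have : d * d * (576 * L) <= d * d * (ms * n%:R) by apply: ler_wpM2l => //; apply: mulr_ge0.
  have -> : d * d * (ms * n%:R) = ms * (ms * L) by rewrite -hd; ring.
  move=> h6.
  have : (d * d * 576) * L <= (ms * ms) * L by clear -h6; lra.
  by rewrite ler_pM2r.
have d8 : d <= ms / 24.
  have : d * d <= (ms/24) * (ms/24) by clear -dms; lra.
  clear -d0 msp; move=> h7; nra.
have h0 : 0 <= h by clear -hh d8 msp; lra.
set e := Num.sqrt (2 * h * ln W%:R / n%:R).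
have e0 : 0 <= e := sqrtr_ge0 _.
have he : e * e * n%:R = 2 * h * ln W%:R.
  rewrite -expr2 /e sqr_sqrtr ?divfK ?gt_eqF //.
  apply: divr_ge0; [apply: mulr_ge0; [apply: mulr_ge0|] | ]; clear -h0 lnW0 np; lra.
have ed : d * d <= 4 * (e * e).
  have : d * d * n%:R <= 4 * (e * e) * n%:R.
    rewrite hd -mulrA he.
    have : ms * L <= 2 * (h * L) by clear -hh d8 Lp msp; nra.
    have : h * L <= h * (2 * ln W%:R) by apply: ler_wpM2l.
    have := mulr_ge0 h0 lnW0.
    move=> h10 h9 h8; clear -h8 h9 h10; lra.
  by rewrite ler_pM2r.
have ed2 : d <= 2 * e by clear -ed d0 e0; nra.
clear -ed2 hh; lra.
Qed.
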